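(* Let $V$ be a real vector space, let $F$ be a geometric mean closed vector lattice, let $T\colon V\times V\to F$ be a vector semi-inner product, and let $u\in F^+$. Define $\|x\|^T_u:=T(x,x)\boxtimes u$ for $x\in V$. If $x,y\in V$ satisfy $T(x,y)=0$, then \[ \|x+y\|^T_u=\|x\|^T_u\boxplus\|y\|^T_u. \]
   Context: All vector spaces are over $\mathbb{R}$ and all vector lattices are Archimedean; $F^+=\{x\in F:x\ge0\}$. A vector lattice $F$ is geometric mean closed if $\inf\{\theta u+\theta^{-1}v:\theta\in(0,\infty)\}$ exists in $F$ for all $u,v\in F^+$, and then $u\boxtimes v:=2^{-1}\inf\{\theta u+\theta^{-1}v:\theta\in(0,\infty)\}$. For $u,v\in F$, $u\boxplus v:=\sup\{(\cos\theta)u+(\sin\theta)v:\theta\in[0,2\pi]\}$; this supremum exists in every geometric mean closed vector lattice. A map $T\colon V\times V\to F$ is a vector semi-inner product if it is bilinear, symmetric ($T(x,y)=T(y,x)$), and satisfies $T(x,x)\ge 0$ for all $x\in V$. *)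

(* Defs.v *)
From HB Require Import structures.
From mathcomp Require Import all_boot all_order all_algebra.
From mathcomp Require Import all_classical all_reals.
From mathcomp Require Import trigo.
From mathcomp Require Import Rstruct.
From Stdlib Require Import Rdefinitions.

Set Implicit Arguments.
Unset Strict Implicit.
Unset Printing Implicit Defensive.
Import Order.TTheory GRing.Theory Num.Theory.
Local Open Scope classical_set_scope.
Local Open Scope ring_scope.

Notation RR := Rdefinitions.R.

Section Defs.
Variables (F : lmodType RR) (le : F -> F -> Prop).

Definition is_ub (S : set F) (a : F) : Prop := forall s, S s -> le s a.
Definition is_lb (S : set F) (a : F) : Prop := forall s, S s -> le a s.
Definition is_sup (S : set F) (a : F) : Prop :=
  is_ub S a /\ forall b, is_ub S b -> le a b.
Definition is_inf (S : set F) (a : F) : Prop :=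
  is_lb S a /\ forall b, is_lb S b -> le b a.

Record vector_lattice : Prop := {
  vl_refl : forall x, le x x;
  vl_antisym : forall x y, le x y -> le y x -> x = y;
  vl_trans : forall x y z, le x y -> le y z -> le x z;
  vl_add : forall x y z, le x y -> le (x + z) (y + z);
  vl_scale : forall (a : RR) x y, 0 <= a -> le x y -> le (a *: x) (a *: y);
  vl_sup2 : forall x y, exists s, is_sup [set x; y] s;
  vl_inf2 : forall x y, exists s, is_inf [set x; y] s;
  vl_archimedean : forall x y, le 0 x -> le 0 y ->
     (forall n : nat, le (n%:R *: x) y) -> x = 0 }.

Definition gm_set (u v : F) : set F :=
  [set w | exists theta : RR, 0 < theta /\ w = theta *: u + theta^-1 *: v].

Definition geometric_mean_closed : Prop :=
  forall u v, le 0 u -> le 0 v -> exists a, is_inf (gm_set u v) a.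

Definition boxtimes (u v : F) : F :=
  (2 : RR)^-1 *: xget 0 [set a | is_inf (gm_set u v) a].

Definition bp_set (u v : F) : set F :=
  [set w | exists theta : RR, 0 <= theta <= 2 * pi /\
           w = cos theta *: u + sin theta *: v].

Definition boxplus (u v : F) : F :=
  xget 0 [set a | is_sup (bp_set u v) a].

Definition vector_semi_inner_product (V : lmodType RR) (T : V -> V -> F) : Prop :=
  (forall (a : RR) x y z, T (a *: x + y) z = a *: T x z + T y z) /\
  (forall (a : RR) x y z, T x (a *: y + z) = a *: T x y + T x z) /\
  (forall x y, T x y = T y x) /\
  (forall x, le 0 (T x x)).

End Defs.

(* Main.v *)
Require Import Defs.
From HB Require Import structures.
From mathcomp Require Import all_boot all_order all_algebra.
From mathcomp Require Import all_classical all_reals.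
From mathcomp Require Import trigo Rstruct.
From mathcomp Require Import ring lra.
Import Order.TTheory GRing.Theory Num.Theory.
Local Open Scope ring_scope.
Set Implicit Arguments.
Unset Strict Implicit.

Section Reals.
Variable N : RR.
Hypothesis hN : 1 <= N.
Definition tt (j : nat) : RR := (N ^+ 2 + j%:R) / N ^+ 3.

Lemma N0 : 0 < N. Proof. by apply: lt_le_trans hN; rewrite ltr01. Qed.
Lemma yy_gt0 j : 0 < N ^+ 2 + j%:R.
Proof. by have h := N0; apply: ltr_wpDr; rewrite ?ler0n // exprn_gt0. Qed.
Lemma tt_gt0 j : 0 < tt j.
Proof. by have h := N0; rewrite /tt divr_gt0 ?yy_gt0 // exprn_gt0. Qed.
Lemma tt_inc j : 0 <= tt j.+1 - tt j /\ 2^-1 * (tt j.+1 - tt j) <= N^-1.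
Proof.
have h := N0; have h3 : 0 < N ^+ 3 by rewrite exprn_gt0.
have -> : tt j.+1 - tt j = (N ^+ 3)^-1.
  by rewrite /tt -natr1; field; rewrite gt_eqF.
split; first by rewrite invr_ge0 ltW.
rewrite -subr_ge0.
have -> : N^-1 - 2^-1 * (N ^+ 3)^-1 = (2 * N ^+ 2 - 1) / (2 * N ^+ 3).
  by field; rewrite gt_eqF.
apply: divr_ge0; last by rewrite mulr_ge0 // ltW.
rewrite subr_ge0 expr2; have hN' := hN; nra.
Qed.
Lemma tt_dec j : 0 <= (tt j)^-1 - (tt j.+1)^-1 /\
   2^-1 * ((tt j)^-1 - (tt j.+1)^-1) <= N^-1.
Proof.
have h := N0; have h3 : 0 < N ^+ 3 by rewrite exprn_gt0.
have hy := yy_gt0 j; have hy1 := yy_gt0 j.+1.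
rewrite /tt -natr1 addrA in hy1 *.
set y := N ^+ 2 + j%:R in hy hy1 *.
have hyN : N ^+ 2 <= y by rewrite /y lerDl ler0n.
have -> : (y / N ^+ 3)^-1 - ((y + 1) / N ^+ 3)^-1 = N ^+ 3 / (y * (y + 1)).
  by field; rewrite !gt_eqF.
split; first by rewrite divr_ge0 ?ltW // mulr_gt0.
rewrite -subr_ge0.
have -> : N^-1 - 2^-1 * (N ^+ 3 / (y * (y + 1))) =
    (2 * (y * (y + 1)) - N ^+ 4) / (2 * N * (y * (y + 1))).
  by field; rewrite !gt_eqF // mulr_gt0.
apply: divr_ge0; last by rewrite !mulr_ge0 // ltW.
rewrite subr_ge0; nra.
Qed.
Lemma tt0 : tt 0 = N^-1.
Proof. by have h := N0; rewrite /tt addr0; field; rewrite gt_eqF. Qed.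
Lemma ttM M : M%:R = N ^+ 4 -> (tt M)^-1 <= N^-1.
Proof.
move=> hM; have h := N0; rewrite /tt hM -subr_ge0.
have -> : N^-1 - ((N ^+ 2 + N ^+ 4) / N ^+ 3)^-1 = 1 / (N * (1 + N ^+ 2)).
  have h2 : 0 < N ^+ 2 by rewrite exprn_gt0.
  have h4 : 0 < N ^+ 4 by rewrite exprn_gt0.
  by field; rewrite !gt_eqF // addr_gt0 // ltr01.
apply: divr_ge0 => //; apply: mulr_ge0; [exact: ltW | apply: addr_ge0 => //; exact: sqr_ge0].
Qed.
End Reals.
Section Lat.
Variables (F : lmodType RR) (le : F -> F -> Prop).
Hypothesis HL : vector_lattice le.
Local Notation "x <=: y" := (le x y) (at level 70, no associativity).

Lemma leR x : x <=: x. Proof. exact: (vl_refl HL). Qed.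
Lemma leT x y z : x <=: y -> y <=: z -> x <=: z. Proof. exact: (vl_trans HL). Qed.
Lemma leA x y : x <=: y -> y <=: x -> x = y. Proof. exact: (vl_antisym HL). Qed.
Lemma leD2r x y z : x <=: y -> x + z <=: y + z. Proof. exact: (vl_add HL). Qed.
Lemma leD2l x y z : x <=: y -> z + x <=: z + y.
Proof. by move=> h; rewrite ![z + _]addrC; apply: leD2r. Qed.
Lemma leD x y z w : x <=: y -> z <=: w -> x + z <=: y + w.
Proof. move=> h1 h2; apply: leT (leD2r z h1) _; exact: leD2l. Qed.
Lemma leN x y : x <=: y -> - y <=: - x.
Proof.
move=> h; have := leD2r (- x - y) h.
have -> : x + (- x - y) = - y by rewrite addrA subrr add0r.
by have -> : y + (- x - y) = - x by rewrite addrC -addrA addNr addr0.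
Qed.
Lemma leNE x y : (- y <=: - x) -> x <=: y.
Proof. by move/leN; rewrite !opprK. Qed.
Lemma le_subr a b c : a + c <=: b -> a <=: b - c.
Proof. by move/(leD2r (- c)); rewrite addrK. Qed.
Lemma le_subr' a b c : a <=: b - c -> a + c <=: b.
Proof. by move/(leD2r c); rewrite subrK. Qed.
Lemma le_subl a b c : a <=: b + c -> a - c <=: b.
Proof. by move/(leD2r (- c)); rewrite addrK. Qed.
Lemma le_subl' a b c : a - c <=: b -> a <=: b + c.
Proof. by move/(leD2r c); rewrite subrK. Qed.
Lemma le0sub x y : 0 <=: y - x -> x <=: y.
Proof. by move=> h; have := le_subr' h; rewrite add0r. Qed.
Lemma le0sub' x y : x <=: y -> 0 <=: y - x.
Proof. by move=> h; apply: le_subr; rewrite add0r. Qed.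
Lemma leZ (a : RR) x y : 0 <= a -> x <=: y -> a *: x <=: a *: y.
Proof. exact: (vl_scale HL). Qed.
Lemma leZ0 (a : RR) x : 0 <= a -> 0 <=: x -> 0 <=: a *: x.
Proof. by move=> ha hx; have := leZ ha hx; rewrite scaler0. Qed.
Lemma leZr (a b : RR) m : a <= b -> 0 <=: m -> a *: m <=: b *: m.
Proof.
move=> hab hm; apply: le0sub; rewrite -scalerBl; apply: leZ0 => //.
by rewrite subr_ge0.
Qed.
Lemma leZ0n (a : RR) x : a <= 0 -> 0 <=: x -> a *: x <=: 0.
Proof. by move=> ha hx; have := leZr ha hx; rewrite scale0r. Qed.

Definition join x y := xget 0 [set s | is_sup le [set x; y] s].
Definition meet x y := xget 0 [set s | is_inf le [set x; y] s].
Lemma joinP x y : is_sup le [set x; y] (join x y).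
Proof. apply: xgetPex; exact: (vl_sup2 HL). Qed.
Lemma meetP x y : is_inf le [set x; y] (meet x y).
Proof. apply: xgetPex; exact: (vl_inf2 HL). Qed.
Lemma join_l x y : x <=: join x y.
Proof. by case: (joinP x y) => h _; apply: h; left. Qed.
Lemma join_r x y : y <=: join x y.
Proof. by case: (joinP x y) => h _; apply: h; right. Qed.
Lemma join_lub x y z : x <=: z -> y <=: z -> join x y <=: z.
Proof. by move=> h1 h2; case: (joinP x y) => _; apply => s [->|->]. Qed.
Lemma meet_l x y : meet x y <=: x.
Proof. by case: (meetP x y) => h _; apply: h; left. Qed.
Lemma meet_r x y : meet x y <=: y.
Proof. by case: (meetP x y) => h _; apply: h; right. Qed.
Lemma meet_glb x y z : z <=: x -> z <=: y -> z <=: meet x y.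
Proof. by move=> h1 h2; case: (meetP x y) => _; apply => s [->|->]. Qed.
Lemma join_C x y : join x y = join y x.
Proof. by apply: leA; apply: join_lub; (apply: join_l || apply: join_r). Qed.
Lemma meet_C x y : meet x y = meet y x.
Proof. by apply: leA; apply: meet_glb; (apply: meet_l || apply: meet_r). Qed.
Lemma joinD x y z : join (x + z) (y + z) = join x y + z.
Proof.
apply: leA.
  by apply: join_lub; apply: leD2r; [apply: join_l | apply: join_r].
apply: le_subr'; apply: join_lub; apply: le_subr.
  exact: join_l. exact: join_r.
Qed.
Lemma meetE x y : meet x y = x + y - join x y.
Proof.
apply: leA.
  apply: le_subr; rewrite addrC; apply: le_subr'; apply: join_lub.
    by apply: le_subr; apply: leD2l; apply: meet_r.
  by apply: le_subr; rewrite addrC; apply: leD2r; apply: meet_l.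
apply: meet_glb; apply: le_subl.
  by apply: leD2l; apply: join_r.
by rewrite addrC; apply: leD2l; apply: join_l.
Qed.
Lemma meetD x y z : meet (x + z) (y + z) = meet x y + z.
Proof.
rewrite !meetE joinD opprD (addrACA x z y z) (addrACA (x + y) (z + z) (- join x y) (- z)) addrK.
by [].
Qed.
Lemma join_mono x y x' y' : x <=: x' -> y <=: y' -> join x y <=: join x' y'.
Proof.
move=> h1 h2; apply: join_lub.
  exact: leT h1 (join_l _ _). exact: leT h2 (join_r _ _).
Qed.
Lemma meet_mono x y x' y' : x <=: x' -> y <=: y' -> meet x y <=: meet x' y'.
Proof.
move=> h1 h2; apply: meet_glb.
  exact: leT (meet_l _ _) h1. exact: leT (meet_r _ _) h2.
Qed.
Lemma distr x y z : meet x (join y z) <=: join (meet x y) (meet x z).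
Proof.
set d := join (meet x y) (meet x z).
have hy : y <=: d - x + join x (join y z).
  have h : meet x y <=: d by apply: join_l.
  rewrite meetE in h.
  have h' : y <=: d - x + join x y.
    apply: le_subl'; apply: le_subr.
    by rewrite [_ + x]addrC addrA.
  apply: leT h' _; apply: leD2l; apply: join_mono; first exact: leR.
  exact: join_l.
have hz : z <=: d - x + join x (join y z).
  have h : meet x z <=: d by apply: join_r.
  rewrite meetE in h.
  have h' : z <=: d - x + join x z.
    apply: le_subl'; apply: le_subr.
    by rewrite [_ + x]addrC addrA.
  apply: leT h' _; apply: leD2l; apply: join_mono; first exact: leR.
  exact: join_r.
have h := leD2l x (join_lub hy hz).
rewrite meetE; apply: le_subl; apply: leT h _.
by rewrite addrCA addrA subrK; apply: leR.
Qed.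
Lemma le0N x : x <=: 0 -> 0 <=: - x.
Proof. by move/leN; rewrite oppr0. Qed.
Lemma leN0 x : 0 <=: x -> - x <=: 0.
Proof. by move/leN; rewrite oppr0. Qed.
Definition pp h := join h 0.
Definition nn h := join (- h) 0.
Definition vabs h := pp h + nn h.
Lemma pp_ge0 h : 0 <=: pp h. Proof. exact: join_r. Qed.
Lemma nn_ge0 h : 0 <=: nn h. Proof. exact: join_r. Qed.
Lemma meet0E h : meet h 0 = - nn h.
Proof.
apply: leA.
  apply: leNE; rewrite opprK; apply: join_lub.
    by apply: leN; apply: meet_l.
  by apply: le0N; apply: meet_r.
apply: meet_glb.
  by apply: leNE; rewrite opprK; apply: join_l.
by apply: leN0; apply: join_r.
Qed.
Lemma ppE h : pp h = h + nn h.
Proof.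
have := meetE h 0; rewrite meet0E addr0 => e.
by rewrite /pp -[nn h]opprK e opprB addrC subrK.
Qed.
Lemma pp_meet_nn h : meet (pp h) (nn h) = 0.
Proof.
by rewrite ppE -{2}[nn h]add0r meetD meet0E addNr.
Qed.
Lemma disj x y : meet x y = 0 -> x + y = join x y.
Proof. by move=> e; have := meetE x y; rewrite e => /eqP; rewrite eq_sym subr_eq0 => /eqP. Qed.
Lemma vabsE h : vabs h = join (pp h) (nn h).
Proof. exact/disj/pp_meet_nn. Qed.
Lemma nnN h : nn (- h) = pp h.
Proof. by rewrite /nn /pp opprK. Qed.
Lemma pp_le0 h : h <=: 0 -> pp h = 0.
Proof. by move=> hh; apply: leA; [apply: join_lub => //; apply: leR | apply: pp_ge0]. Qed.
Lemma ppN_le x y : x <=: y -> nn (y - x) = 0.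
Proof.
move=> h; rewrite /nn; apply: leA; last exact: join_r.
apply: join_lub; last exact: leR.
by rewrite opprB; apply: le_subl; rewrite add0r.
Qed.
Lemma join_le_add x y : 0 <=: x -> 0 <=: y -> join x y <=: x + y.
Proof.
move=> hx hy; apply: join_lub.
  by rewrite -{1}[x]addr0; apply: leD2l.
by rewrite -{1}[y]add0r; apply: leD2r.
Qed.
Lemma meet_half a b : meet a b <=: 2^-1 *: (a + b).
Proof.
have h : meet a b + meet a b <=: a + b by apply: leD; [apply: meet_l | apply: meet_r].
have h2 : (0:RR) <= 2^-1 by rewrite invr_ge0 ler0n.
have := leZ h2 h.
by rewrite -mulr2n -scaler_nat scalerA mulVf ?scale1r // pnatr_eq0.
Qed.

Lemma stepS e h0 h1 k : 0 <=: k -> meet h1 (- h0) <=: k ->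
  e <=: join (nn h0) k -> e <=: vabs h1 -> e <=: join (nn h1) k.
Proof.
move=> hk hm e1 e2.
have c1 : meet (pp h1) (nn h0) <=: k.
  apply: leT (distr _ _ _) _; apply: join_lub.
    rewrite meet_C; apply: leT (distr _ _ _) _; apply: join_lub.
      by rewrite meet_C.
    exact: leT (meet_r _ _) hk.
  exact: leT (meet_r _ _) hk.
have e3 : e <=: meet (vabs h1) (join (nn h0) k) by apply: meet_glb.
apply: leT e3 _; apply: leT (distr _ _ _) _; apply: join_lub; last first.
  exact: leT (meet_r _ _) (join_r _ _).
rewrite meet_C vabsE; apply: leT (distr _ _ _) _; apply: join_lub.
  rewrite meet_C; exact: leT c1 (join_r _ _).
exact: leT (meet_r _ _) (join_l _ _).
Qed.

Lemma chain_inv e k (g : nat -> F) M : 0 <=: k ->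
  (forall j, (j < M)%N -> meet (g j.+1) (- g j) <=: k) ->
  (forall j, (j <= M)%N -> e <=: vabs (g j)) ->
  e - pp (g 0%N) <=: join (nn (g M)) k.
Proof.
move=> hk; elim: M => [|M IH] hinc habs.
  apply: le_subl; rewrite addrC; apply: leT (habs 0%N (leqnn _)) _.
  by rewrite /vabs; apply: leD2l; apply: join_l.
apply: stepS hk (hinc M (ltnSn _)) _ _.
  by apply: IH => j hj; [apply: hinc; apply: ltnW | apply: habs; apply: leqW].
apply: le_subl; apply: leT (habs _ (leqnn _)) _.
by rewrite -{1}[vabs _]addr0; apply: leD2l; apply: pp_ge0.
Qed.

Lemma chain e k (g : nat -> F) M : 0 <=: k ->
  (forall j, (j < M)%N -> meet (g j.+1) (- g j) <=: k) ->
  (forall j, (j <= M)%N -> e <=: vabs (g j)) ->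
  e <=: pp (g 0%N) + (nn (g M) + k).
Proof.
move=> hk h1 h2; have := chain_inv hk h1 h2 => h.
rewrite addrC; apply: le_subl'; apply: leT h _.
by apply: join_le_add => //; apply: nn_ge0.
Qed.

Lemma arch e E : 0 <=: e -> (forall n : nat, (0 < n)%N -> n%:R *: e <=: E) -> e = 0.
Proof.
move=> he hn.
have hE : 0 <=: E by have := hn 1%N isT; rewrite scale1r => h; apply: leT he h.
apply: (vl_archimedean HL he hE).
by case=> [|n]; [rewrite scale0r | exact: hn].
Qed.
Lemma inf_mem a u P t : is_inf le (gm_set a u) P -> 0 < t ->
  P <=: t *: a + t^-1 *: u.
Proof. by case=> h _ ht; apply: h; exists t. Qed.
Lemma inf_ge0 a u P : 0 <=: a -> 0 <=: u -> is_inf le (gm_set a u) P -> 0 <=: P.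
Proof.
move=> ha hu [_ h]; apply: h => s [t [ht ->]].
have ht' : 0 <= t^-1 by rewrite invr_ge0 ltW.
by have := leD (leZ0 (ltW ht) ha) (leZ0 ht' hu); rewrite addr0.
Qed.
Lemma inf_lb a u P v : is_inf le (gm_set a u) P ->
  (forall t, 0 < t -> v <=: t *: a + t^-1 *: u) -> v <=: P.
Proof. by case=> _ h hv; apply: h => s [t [ht ->]]; apply: hv. Qed.

Lemma LB a u P m (g k : RR) : is_inf le (gm_set a u) P -> 0 <=: m ->
  0 < g -> 0 < k -> m <=: (g * k) *: a -> m <=: (g / k) *: u ->
  m <=: g *: (2^-1 *: P).
Proof.
move=> hP hm hg hk h1 h2.
suff h : (2 / g) *: m <=: P.
  have := leZ (a := g / 2) (ltW (divr_gt0 hg (ltr0n _ 2))) h.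
  have c : g / 2 * (2 / g) = 1 by field; rewrite gt_eqF.
  by rewrite scalerA c scale1r scalerA.
apply: inf_lb hP _ => t ht.
have e1 := leZ (a := t / (g * k)) (ltW (divr_gt0 ht (mulr_gt0 hg hk))) h1.
have e2 := leZ (a := k / (g * t)) (ltW (divr_gt0 hk (mulr_gt0 hg ht))) h2.
rewrite scalerA in e1; rewrite scalerA in e2.
have c1 : t / (g * k) * (g * k) = t by rewrite mulfVK // mulf_neq0 // gt_eqF.
have c2 : k / (g * t) * (g / k) = t^-1 by field; rewrite !gt_eqF.
rewrite c1 in e1; rewrite c2 in e2.
apply: leT (leD e1 e2); rewrite -scalerDl; apply: leZr => //.
rewrite -subr_ge0.
have -> : t / (g * k) + k / (g * t) - 2 / g = (t - k) ^+ 2 / (g * k * t).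
  by field; rewrite !gt_eqF.
apply: divr_ge0; first exact: sqr_ge0.
by rewrite !mulr_ge0 // ltW.
Qed.
Lemma half_c a u P (c t : RR) : is_inf le (gm_set a u) P -> 0 <=: a -> 0 <=: u ->
  0 < t -> c *: P <=: t *: a + (c ^+ 2 / t) *: u.
Proof.
move=> hP ha hu ht; case: (ltrP 0 c) => hc.
  have h := leZ (ltW hc) (inf_mem hP (divr_gt0 ht hc)).
  rewrite scalerDr !scalerA in h.
  have c1 : c * (t / c) = t by field; rewrite gt_eqF.
  have c2 : c * (t / c)^-1 = c ^+ 2 / t by field; rewrite !gt_eqF.
  by rewrite c1 c2 in h.
apply: leT (leZ0n hc (inf_ge0 ha hu hP)) _.
have h1 : 0 <= c ^+ 2 / t by rewrite divr_ge0 ?sqr_ge0 // ltW.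
by have := leD (leZ0 (ltW ht) ha) (leZ0 h1 hu); rewrite addr0.
Qed.

Lemma upper a b u P Q R (c s : RR) : 0 <=: a -> 0 <=: b -> 0 <=: u ->
  is_inf le (gm_set a u) P -> is_inf le (gm_set b u) Q ->
  is_inf le (gm_set (a + b) u) R -> c ^+ 2 + s ^+ 2 = 1 ->
  c *: (2^-1 *: P) + s *: (2^-1 *: Q) <=: 2^-1 *: R.
Proof.
move=> ha hb hu hP hQ hR hcs.
suff h : c *: P + s *: Q <=: R.
  have h2 : (0:RR) <= 2^-1 by rewrite invr_ge0 ler0n.
  have := leZ h2 h; rewrite scalerDr !scalerA.
  by rewrite [2^-1 * c]mulrC [2^-1 * s]mulrC.
apply: inf_lb hR _ => t ht.
have -> : t *: (a + b) + t^-1 *: u =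
   (t *: a + (c ^+ 2 / t) *: u) + (t *: b + (s ^+ 2 / t) *: u).
  by rewrite addrACA -scalerDl -mulrDl hcs mul1r scalerDr.
by apply: leD; apply: half_c.
Qed.
Lemma piece a u P A V (t x : RR) : 0 <=: a -> 0 <=: u -> is_inf le (gm_set a u) P ->
  0 <=: A -> A <=: t *: a -> 0 <=: V -> V <=: t^-1 *: u -> 0 < t -> 0 <= x ->
  meet A (x *: V) <=: Num.sqrt x *: (2^-1 *: P).
Proof.
move=> ha hu hP hA0 hAa hV0 hVu ht hx.
have [->|xn0] := eqVneq x 0.
  by rewrite sqrtr0 !scale0r; apply: meet_r.
have hx' : 0 < x by rewrite lt_neqAle eq_sym xn0 hx.
have hc : 0 < Num.sqrt x by rewrite sqrtr_gt0.
apply: (LB hP _ hc (divr_gt0 ht hc)).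
- by apply: meet_glb => //; apply: leZ0.
- have -> : Num.sqrt x * (t / Num.sqrt x) = t by field; rewrite gt_eqF.
  exact: leT (meet_l _ _) hAa.
- have -> : Num.sqrt x / (t / Num.sqrt x) = x * t^-1.
    by rewrite -[in RHS](sqr_sqrtr hx); field; rewrite !gt_eqF.
  rewrite -scalerA; apply: leT (meet_r _ _) _; exact: leZ.
Qed.

Lemma ident A' V g (x : RR) : g = x *: V - A' ->
  meet A' (x *: V) + meet (V - A') ((1 - x) *: V) = V - vabs g.
Proof.
move=> eg.
have e1 : meet A' (x *: V) = - nn g + A'.
  by rewrite -meet0E -meetD add0r eg subrK meet_C.
have e2 : meet (V - A') ((1 - x) *: V) = - pp g + (V - A').
  rewrite -nnN -meet0E -meetD add0r meet_C; congr meet.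
  by apply/esym; rewrite eg opprB addrC addrA subrK scalerBl scale1r.
rewrite e1 e2 /vabs addrACA (addrCA A' V) subrr addr0 opprD addrC.
by congr (_ + _); rewrite addrC.
Qed.
Lemma sub_le0 x y : x - y <=: 0 -> x <=: y.
Proof. by move/le_subl'; rewrite add0r. Qed.
Lemma pos_add x y : 0 <=: x -> 0 <=: y -> 0 <=: x + y.
Proof. by move=> h1 h2; have := leD h1 h2; rewrite addr0. Qed.

Lemma lower_meet a b u P Q w (t : RR) :
  0 <=: a -> 0 <=: b -> 0 <=: u ->
  is_inf le (gm_set a u) P -> is_inf le (gm_set b u) Q ->
  (forall x : RR, 0 <= x <= 1 ->
     Num.sqrt x *: (2^-1 *: P) + Num.sqrt (1 - x) *: (2^-1 *: Q) <=: w) ->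
  0 < t -> meet (t *: (a + b)) (t^-1 *: u) <=: w.
Proof.
move=> ha hb hu hP hQ H ht.
have ht0 : 0 <= t by exact: ltW.
have hti : 0 <= t^-1 by rewrite invr_ge0.
set V := meet (t *: (a + b)) (t^-1 *: u).
set A' := meet (t *: a) V.
have hV0 : 0 <=: V.
  by apply: meet_glb; apply: leZ0 => //; apply: pos_add.
have hA0 : 0 <=: A' by apply: meet_glb => //; apply: leZ0.
have hAa : A' <=: t *: a by apply: meet_l.
have hAV : A' <=: V by apply: meet_r.
have hB0 : 0 <=: V - A' by apply: le0sub'.
have hBb : V - A' <=: t *: b.
  apply: le_subl; rewrite addrC /A' -meetD; apply: meet_glb.
    by rewrite -scalerDr; apply: meet_l.
  by rewrite -{1}[V]addr0; apply: leD2l; apply: leZ0.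
have hVu : V <=: t^-1 *: u by apply: meet_r.
have K : forall x : RR, 0 <= x <= 1 -> V - vabs (x *: V - A') <=: w.
  move=> x /andP [hx0 hx1]; rewrite -(@ident A' V (x *: V - A') x erefl).
  apply: leT (H x _); last by rewrite hx0.
  apply: leD; first exact: (piece ha hu hP hA0 hAa hV0 hVu ht hx0).
  by apply: (piece hb hu hQ hB0 hBb hV0 hVu ht); rewrite subr_ge0.
set e := pp (V - w).
have he0 : 0 <=: e by apply: pp_ge0.
suff e0 : e = 0.
  have : V - w <=: e by apply: join_l.
  by rewrite e0 => h; apply: sub_le0.
apply: (arch he0 (E := V)) => n hn.
have hn' : (0 : RR) < n%:R by rewrite ltr0n.
pose g j := (j%:R / n%:R) *: V - A'.
have hk : 0 <=: n%:R^-1 *: V by apply: leZ0 => //; rewrite invr_ge0 ltW.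
have hc := chain (M := n) (g := g) (e := e) hk.
have hc' : e <=: pp (g 0%N) + (nn (g n) + n%:R^-1 *: V).
  apply: hc.
    move=> j hj; apply: leT (meet_half _ _) _.
    have -> : g j.+1 + - g j = n%:R^-1 *: V.
      rewrite /g opprB addrA subrK -scalerBl; congr (_ *: _).
      by rewrite -mulrBl -addn1 natrD addrAC subrr add0r mul1r.
    rewrite scalerA; apply: leZr => //.
    by rewrite ler_piMl // ?invr_ge0 ?ltW // invf_lt1 ?ltr0n ?ltr1n.
  move=> j hj; apply: join_lub; last by apply: pos_add; [apply: pp_ge0 | apply: nn_ge0].
  apply: le_subl; rewrite addrC; apply: le_subl'.
  apply: K; rewrite divr_ge0 ?ler0n //=.
  by rewrite ler_pdivrMr // mul1r ler_nat.
have e1 : pp (g 0%N) = 0.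
  by apply: pp_le0; rewrite /g mul0r scale0r add0r; apply: leN0.
have e2 : nn (g n) = 0.
  by rewrite /g divff ?gt_eqF // scale1r; apply: ppN_le.
rewrite e1 e2 add0r add0r in hc'.
by have := leZ (ltW hn') hc'; rewrite scalerA divff ?gt_eqF // scale1r.
Qed.
Lemma grp h (b n : F) : (h + b) + b = (- n + b) + (- n + b) + ((h + n) + n).
Proof.
rewrite (addrACA (- n) b (- n) b) -(addrA h n n).
rewrite (addrC ((- n + - n) + (b + b))) -(addrA h).
by rewrite -(addrA h (n + n)) (addrA (n + n)) -opprD subrr add0r.
Qed.

Lemma identD al be : al + be = (meet al be + meet al be) + vabs (al - be).
Proof.
have -> : al = (al - be) + be by rewrite subrK.
rewrite addrK.
have -> : meet (al - be + be) be = - nn (al - be) + be.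
  by rewrite -{3}[be]add0r meetD meet0E.
by rewrite /vabs ppE; apply: grp.
Qed.
Lemma grp2 (p q r s : F) : (p - q) + - (r - s) = (p - r) + (s - q).
Proof. by rewrite opprB addrACA (addrC (- q)) -addrACA. Qed.

Lemma lower_D X u R w : 0 <=: X -> 0 <=: u -> is_inf le (gm_set X u) R ->
  (forall t : RR, 0 < t -> meet (t *: X) (t^-1 *: u) <=: w) -> 2^-1 *: R <=: w.
Proof.
move=> hX hu hR H.
set e := pp (R - (w + w)).
have hbnd : forall t : RR, 0 < t -> e <=: vabs (t *: X - t^-1 *: u).
  move=> t ht; apply: join_lub; last by apply: pos_add; [apply: pp_ge0 | apply: nn_ge0].
  apply: le_subl; have h1 := inf_mem hR ht; rewrite identD in h1.
  apply: leT h1 _; rewrite addrC; apply: leD2l; apply: leD; exact: H.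
suff e0 : e = 0.
  have : R - (w + w) <=: e by apply: join_l.
  rewrite e0 => /sub_le0 h.
  have h2 : (0:RR) <= 2^-1 by rewrite invr_ge0 ler0n.
  have := leZ h2 h.
  by rewrite -mulr2n -scaler_nat scalerA mulVf ?scale1r // pnatr_eq0.
apply: (arch (pp_ge0 _) (E := X + (u + (X + u)))) => n hn.
set N : RR := n%:R.
have hN : 1 <= N by rewrite /N ler1n.
have hN0 : 0 < N by apply: N0 hN.
have hNi : 0 <= N^-1 by rewrite invr_ge0 ltW.
pose g j := tt N j *: X - (tt N j)^-1 *: u.
set k := N^-1 *: X + N^-1 *: u.
have hk : 0 <=: k by apply: pos_add; apply: leZ0.
have hc := chain (M := (n ^ 4)%N) (g := g) (e := e) hk.
have hc' : e <=: pp (g 0%N) + (nn (g (n ^ 4)%N) + k).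
  apply: hc; last by move=> j _; apply: hbnd; apply: tt_gt0.
  move=> j _; apply: leT (meet_half _ _) _.
  rewrite /g grp2 -!scalerBl scalerDr !scalerA.
  have [i1 i2] := tt_inc hN j; have [d1 d2] := tt_dec hN j.
  by apply: leD; apply: leZr.
have e1 : pp (g 0%N) <=: N^-1 *: X.
  apply: join_lub; last by apply: leZ0.
  rewrite /g tt0 //; apply: le_subl; rewrite -{1}[N^-1 *: X]addr0; apply: leD2l.
  by apply: leZ0 => //; rewrite invr_ge0.
have e2 : nn (g (n ^ 4)%N) <=: N^-1 *: u.
  apply: join_lub; last by apply: leZ0.
  rewrite /g opprB; apply: le_subl; apply: leT (leZr (ttM hN _) hu) _.
    by rewrite /N natrX.
  rewrite -{1}[N^-1 *: u]addr0; apply: leD2l.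
  by apply: leZ0 => //; apply: ltW; apply: tt_gt0.
have h := leT hc' (leD e1 (leD2r k e2)).
have := leZ (ltW hN0) h.
by rewrite /k !scalerDr !scalerA mulfV ?gt_eqF // !scale1r.
Qed.
Lemma inf_uniq S a b : is_inf le S a -> is_inf le S b -> a = b.
Proof. by move=> [h1 h2] [h3 h4]; apply: leA; [apply: h4 | apply: h2]. Qed.
Lemma sup_uniq S a b : is_sup le S a -> is_sup le S b -> a = b.
Proof. by move=> [h1 h2] [h3 h4]; apply: leA; [apply: h2 | apply: h4]. Qed.
Lemma boxtimesE a u P : is_inf le (gm_set a u) P -> boxtimes le a u = 2^-1 *: P.
Proof.
move=> hP; rewrite /boxtimes; congr (_ *: _).
apply (xget_unique _ hP) => z hz; exact: inf_uniq hz hP.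
Qed.

Lemma main_sup a b u P Q R : 0 <=: a -> 0 <=: b -> 0 <=: u ->
  is_inf le (gm_set a u) P -> is_inf le (gm_set b u) Q ->
  is_inf le (gm_set (a + b) u) R ->
  is_sup le (bp_set (2^-1 *: P) (2^-1 *: Q)) (2^-1 *: R).
Proof.
move=> ha hb hu hP hQ hR; split.
  move=> s [th [_ ->]]; apply: (upper ha hb hu hP hQ hR); exact: cos2Dsin2.
move=> w hw; apply: (lower_D (pos_add ha hb) hu hR) => t ht.
apply: (lower_meet ha hb hu hP hQ _ ht) => x /andP [hx0 hx1].
have hc0 : 0 <= Num.sqrt x by apply: sqrtr_ge0.
have hc1 : Num.sqrt x <= 1 by rewrite -sqrtr1 ler_sqrt.
have hc : -1 <= Num.sqrt x <= 1.
  by rewrite hc1 andbT; apply: le_trans hc0; rewrite lerN10.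
have [/andP [hth0 hth1] hcos] := acos_def hc.
apply: hw; exists (acos (Num.sqrt x)); split.
  rewrite hth0 /=; apply: le_trans hth1 _.
  by rewrite ler_peMl ?pi_ge0 // ler1n.
by rewrite hcos sin_acos // sqr_sqrtr.
Qed.
End Lat.

Unset Implicit Arguments.
Set Strict Implicit.

Theorem theorem3p7 (V F : lmodType RR) (le : F -> F -> Prop)
  (T : V -> V -> F) (u : F) (x y : V) :
  vector_lattice le ->
  geometric_mean_closed le ->
  vector_semi_inner_product le T ->
  le 0 u ->
  T x y = 0 ->
  boxtimes le (T (x + y) (x + y)) u =
  boxplus le (boxtimes le (T x x) u) (boxtimes le (T y y) u).
Proof.
move=> HL Hgm [Tl [Tr [Ts Tp]]] hu hxy.
have eT : T (x + y) (x + y) = T x x + T y y.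
  have e1 : forall z, T (x + y) z = T x z + T y z.
    by move=> z; rewrite -{1}[x]scale1r Tl scale1r.
  have e2 : forall z w, T z (x + w) = T z x + T z w.
    by move=> z w; rewrite -{1}[x]scale1r Tr scale1r.
  by rewrite e1 !e2 hxy (Ts y x) hxy addr0 add0r.
rewrite eT.
have ha := Tp x; have hb := Tp y.
have [P hP] := Hgm _ _ ha hu.
have [Q hQ] := Hgm _ _ hb hu.
have [R hR] := Hgm _ _ (pos_add HL ha hb) hu.
rewrite (boxtimesE HL hP) (boxtimesE HL hQ) (boxtimesE HL hR).
have hs := main_sup HL ha hb hu hP hQ hR.
rewrite /boxplus; apply/esym; apply (xget_unique _ hs) => z hz.
exact (sup_uniq HL hz hs).
Qed.
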